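(* In the model described in the context, the expected fidelity of the end-to-end entangled link delivered in a successful round is $$F_{\mathrm{e2e}}=\frac{1+3\,\mathbb E(w_{\mathrm{e2e}})}{4},\qquad \mathbb E(w_{\mathrm{e2e}})=\frac{w_{\mathrm m}^2\,w_{\mathrm b}\,e^{-k t_{\mathrm{msg}}}}{p}\,U_1(k),\qquad k=\frac{2}{t_{\mathrm{coh}}},$$ where $U_1(v):=\mathbb E\big(e^{-vX_{\mathrm{diff}}}\mathbf 1_{Y=1}\big)$ with $X_{\mathrm{diff}}=X_{\max}-X_{\min}$ on $A_1^+\cup A_2^+$ and $X_{\mathrm{diff}}=2X_b-X_1-X_2$ on $A_b^+$. Moreover, for every $v$, $$U_1(v)=2\Big(\mathbb E\big(e^{-v(X_1-X_2)}\mathbf 1_{A_{12}^+}\big)+\mathbb E\big(e^{-v(X_1-X_b)}\mathbf 1_{A_{1b}^+}\big)-\mathbb E\big(e^{-v(X_1-X_2)}\mathbf 1_{A_{12}^+A_{1b}^+}\big)\Big)+\mathbb E\big(e^{-v(2X_b-X_1-X_2)}\mathbf 1_{A_b^+}\big)$$ $$\qquad-\mathbb E\big(e^{-v(X_1-X_b)}\mathbf 1_{A_1^+A_2^+}\big)-2\,\mathbb E\big(e^{-v(X_1-X_2)}\mathbf 1_{A_1^+A_b^+}\big)+\mathbb E\big(\mathbf 1_{A_1^+A_2^+A_b^+}\big).$$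
   Context: Random model: integers $t_{\mathrm m},t_{\mathrm b}\ge1$, $t_{\mathrm{msg}}\ge0$, $t_{\mathrm{cut}}>\max\{t_{\mathrm m},t_{\mathrm b},t_{\mathrm{msg}}\}$; $p_{\mathrm m},p_{\mathrm b}\in(0,1)$; $M_1,M_2,M_b$ independent with $\mathbb P(M_1=j)=\mathbb P(M_2=j)=p_{\mathrm m}(1-p_{\mathrm m})^{j-1}$, $\mathbb P(M_b=j)=p_{\mathrm b}(1-p_{\mathrm b})^{j-1}$, $j\ge1$; $X_1=t_{\mathrm m}M_1$, $X_2=t_{\mathrm m}M_2$, $X_b=t_{\mathrm b}M_b$ are the generation times (within a round) of elementary link 1 (end node–border node, metropolitan network 1), link 2 (end node–border node, metropolitan network 2) and link b (between the two border nodes, backbone); $X_{\max},X_{\min}$ their max and min; $Y=1$ iff $X_{\max}-X_{\min}<t_{\mathrm{cut}}$ (successful round), $p=\mathbb P(Y=1)$. Events: for $i,j\in\{1,2,b\}$, $A_i^+=\{X_{\max}=X_i,\ X_{\max}-X_{\min}<t_{\mathrm{cut}}\}$, $A_{ij}^+=\{X_{\max}=X_i,\ X_{\min}=X_j,\ X_{\max}-X_{\min}<t_{\mathrm{cut}}\}$; juxtaposition denotes intersection. Physical model: every link is a two-qubit Werner state $w|\Phi^+\rangle\langle\Phi^+|+(1-w)\mathbb I_4/4$, $|\Phi^+\rangle=(|00\rangle+|11\rangle)/\sqrt2$, with fidelity $(1+3w)/4$; freshly generated metropolitan links (1 and 2) have Werner parameter $w_{\mathrm m}$ and the fresh backbone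 link has $w_{\mathrm b}$. Each stored qubit undergoes the depolarising channel $\rho\mapsto e^{-t/t_{\mathrm{coh}}}\rho+(1-e^{-t/t_{\mathrm{coh}}})\mathbb I_2/2$ over storage time $t$, so a Werner link both of whose qubits are stored for time $t$ has its parameter multiplied by $e^{-2t/t_{\mathrm{coh}}}$. Each border node performs a noiseless entanglement swap as soon as it holds both adjacent links (swap-as-soon-as-possible), and swapping Werner states with parameters $w,w'$ yields a Werner state with parameter $ww'$. After the final swap the end-to-end link is stored for a further time $t_{\mathrm{msg}}$ (classical notification to the end nodes). $w_{\mathrm{e2e}}$ denotes the Werner parameter of the resulting end-to-end link in a successful round (conditioned on $Y=1$) and $F_{\mathrm{e2e}}$ its expected fidelity. *)

(* Defs.v *)
From Stdlib Require Import Reals Lra Lia Arith Bool.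
From Coquelicot Require Import Coquelicot.
Open Scope R_scope.

Inductive link := L1 | L2 | Lb.

Definition geom (q : R) (j : nat) : R :=
  match j with
  | O => 0
  | S i => q * (1 - q) ^ i
  end.

Definition ExM (pm pb : R) (f : nat -> nat -> nat -> R) : R :=
  Series (fun a => Series (fun b => Series (fun c =>
    geom pm a * geom pm b * geom pb c * f a b c))).

(** Expectation of a function g(X1, X2, Xb) of the generation times
    X1 = tm M1, X2 = tm M2, Xb = tb Mb. *)
Definition EX (pm pb : R) (tm tb : nat) (g : nat -> nat -> nat -> R) : R :=
  ExM pm pb (fun a b c => g (tm * a)%nat (tm * b)%nat (tb * c)%nat).

Definition Xof (x1 x2 xb : nat) (i : link) : nat :=
  match i with L1 => x1 | L2 => x2 | Lb => xb end.

Definition Xmax (x1 x2 xb : nat) : nat := Nat.max x1 (Nat.max x2 xb).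
Definition Xmin (x1 x2 xb : nat) : nat := Nat.min x1 (Nat.min x2 xb).

Definition Ysucc (tcut x1 x2 xb : nat) : bool :=
  Nat.ltb (Xmax x1 x2 xb - Xmin x1 x2 xb) tcut.

Definition Ap (tcut : nat) (i : link) (x1 x2 xb : nat) : bool :=
  Nat.eqb (Xmax x1 x2 xb) (Xof x1 x2 xb i) && Ysucc tcut x1 x2 xb.

Definition Aij (tcut : nat) (i j : link) (x1 x2 xb : nat) : bool :=
  Nat.eqb (Xmax x1 x2 xb) (Xof x1 x2 xb i)
  && Nat.eqb (Xmin x1 x2 xb) (Xof x1 x2 xb j) && Ysucc tcut x1 x2 xb.

Definition indic (b : bool) : R := if b then 1 else 0.

Definition psucc (pm pb : R) (tm tb tcut : nat) : R :=
  EX pm pb tm tb (fun x1 x2 xb => indic (Ysucc tcut x1 x2 xb)).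

Definition CondE (pm pb : R) (tm tb tcut : nat) (g : nat -> nat -> nat -> R) : R :=
  EX pm pb tm tb (fun x1 x2 xb => indic (Ysucc tcut x1 x2 xb) * g x1 x2 xb)
  / psucc pm pb tm tb tcut.

Definition Xdiff (tcut x1 x2 xb : nat) : R :=
  if Ap tcut L1 x1 x2 xb || Ap tcut L2 x1 x2 xb
  then INR (Xmax x1 x2 xb) - INR (Xmin x1 x2 xb)
  else 2 * INR xb - INR x1 - INR x2.

Definition U1 (pm pb : R) (tm tb tcut : nat) (v : R) : R :=
  EX pm pb tm tb (fun x1 x2 xb =>
    exp (- v * Xdiff tcut x1 x2 xb) * indic (Ysucc tcut x1 x2 xb)).

(** Storage of a Werner link (both qubits) for time t: w |-> w e^{-2t/tcoh}. *)
Definition store (tcoh : R) (t : nat) (w : R) : R := w * exp (- 2 * INR t / tcoh).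

Definition swapW (w w' : R) : R := w * w'.

(** Werner parameter of the end-to-end link produced in a round with generation
    times x1, x2, xb under swap-asap: border node A (links 1, b) swaps at
    tA = max(X1, Xb), border node B (links b, 2) swaps at tB = max(X2, Xb);
    every existing link is stored (both qubits) until it is consumed by a swap;
    the final end-to-end link is stored for a further tmsg. *)
Definition w_e2e (wm wb tcoh : R) (tmsg x1 x2 xb : nat) : R :=
  let tA := Nat.max x1 xb in
  let tB := Nat.max x2 xb in
  let wfin :=
    if Nat.leb tA tB then
      (* swap at A first, resulting link (end 1 -- B) stored until tB *)
      swapW (store tcoh (tB - tA) (swapW (store tcoh (tA - x1) wm)
                                         (store tcoh (tA - xb) wb)))
            (store tcoh (tB - x2) wm)
    else
      (* swap at B first, resulting link (A -- end 2) stored until tA *)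
      swapW (store tcoh (tA - x1) wm)
            (store tcoh (tA - tB) (swapW (store tcoh (tB - xb) wb)
                                         (store tcoh (tB - x2) wm)))
  in store tcoh tmsg wfin.

Definition fidW (w : R) : R := (1 + 3 * w) / 4.

Definition Ew_e2e (pm pb wm wb tcoh : R) (tm tb tmsg tcut : nat) : R :=
  CondE pm pb tm tb tcut (fun x1 x2 xb => w_e2e wm wb tcoh tmsg x1 x2 xb).

Definition F_e2e (pm pb wm wb tcoh : R) (tm tb tmsg tcut : nat) : R :=
  CondE pm pb tm tb tcut (fun x1 x2 xb => fidW (w_e2e wm wb tcoh tmsg x1 x2 xb)).

(* Main.v *)
Require Import Defs.
From Stdlib Require Import Reals Lra Lia Arith Bool.
From Coquelicot Require Import Coquelicot.
Open Scope R_scope.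


Definition NS (q : R) (h : nat -> R) : R := Series (fun n => geom q n * h n).

Lemma geom_nonneg q n : 0 < q < 1 -> 0 <= geom q n.
Proof.
  intros Hq; destruct n; simpl; [lra|].
  apply Rmult_le_pos; [lra|]. apply pow_le; lra.
Qed.

Lemma geom_is_series q : 0 < q < 1 -> is_series (geom q) 1.
Proof.
  intros Hq. apply is_series_decr_1.
  assert (H := is_series_geom (1 - q)).
  assert (H1 : Rabs (1 - q) < 1) by (rewrite Rabs_pos_eq; lra).
  specialize (H H1).
  apply (is_series_scal_l q) in H.
  match goal with |- is_series _ ?l => assert (E : l = scal q (/ (1 - (1 - q)))) end.
  { simpl. unfold plus, opp, scal; simpl. unfold mult; simpl.
    change (1 + - 0 = q * / (1 - (1 - q))). field. lra. }
  rewrite E. revert H. apply is_series_ext. intros n. reflexivity.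
Qed.

Lemma geom_ex q : 0 < q < 1 -> ex_series (geom q).
Proof. intros Hq; eexists; apply geom_is_series; auto. Qed.

Lemma geom_Series q : 0 < q < 1 -> Series (geom q) = 1.
Proof. intros; apply is_series_unique, geom_is_series; auto. Qed.

Lemma exs_scal (c : R) (a : nat -> R) : ex_series a -> ex_series (fun n => c * a n).
Proof. intros [l Hl]. exists (c * l). apply (is_series_scal_l c) in Hl. exact Hl. Qed.

Lemma NS_exabs q h B : 0 < q < 1 -> (forall n, Rabs (h n) <= B) ->
  ex_series (fun n => Rabs (geom q n * h n)).
Proof.
  intros Hq Hb.
  apply (@ex_series_le R_AbsRing R_CompleteNormedModule _ (fun n => B * geom q n)).
  - intros n. change (norm (Rabs (geom q n * h n))) with (Rabs (Rabs (geom q n * h n))).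
    rewrite Rabs_Rabsolu, Rabs_mult, (Rabs_pos_eq (geom q n)) by (apply geom_nonneg; auto).
    rewrite Rmult_comm. apply Rmult_le_compat_r; auto. apply geom_nonneg; auto.
  - apply exs_scal. apply geom_ex; auto.
Qed.

Lemma NS_ex q h B : 0 < q < 1 -> (forall n, Rabs (h n) <= B) ->
  ex_series (fun n => geom q n * h n).
Proof. intros; apply ex_series_Rabs; eapply NS_exabs; eauto. Qed.

Lemma NS_bound q h B : 0 < q < 1 -> (forall n, Rabs (h n) <= B) ->
  Rabs (NS q h) <= B.
Proof.
  intros Hq Hb. unfold NS.
  eapply Rle_trans; [apply Series_Rabs; eapply NS_exabs; eauto|].
  eapply Rle_trans; [apply (Series_le _ (fun n => B * geom q n))|].
  - intros n; split; [apply Rabs_pos|].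
    rewrite Rabs_mult, (Rabs_pos_eq (geom q n)) by (apply geom_nonneg; auto).
    rewrite Rmult_comm. apply Rmult_le_compat_r; auto. apply geom_nonneg; auto.
  - apply exs_scal. apply geom_ex; auto.
  - rewrite Series_scal_l, geom_Series by auto. lra.
Qed.

Lemma NS_ext q h1 h2 : (forall n, h1 n = h2 n) -> NS q h1 = NS q h2.
Proof. intros H; unfold NS; apply Series_ext; intros n; rewrite H; auto. Qed.

Lemma NS_scal q c h : NS q (fun n => c * h n) = c * NS q h.
Proof.
  unfold NS. rewrite <- Series_scal_l. apply Series_ext; intros; ring.
Qed.

Lemma NS_plus q h1 h2 B1 B2 : 0 < q < 1 -> (forall n, Rabs (h1 n) <= B1) ->
  (forall n, Rabs (h2 n) <= B2) ->
  NS q (fun n => h1 n + h2 n) = NS q h1 + NS q h2.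
Proof.
  intros Hq H1 H2. unfold NS. rewrite <- Series_plus by (eapply NS_ex; eauto).
  apply Series_ext; intros; ring.
Qed.

Lemma NS_minus q h1 h2 B1 B2 : 0 < q < 1 -> (forall n, Rabs (h1 n) <= B1) ->
  (forall n, Rabs (h2 n) <= B2) ->
  NS q (fun n => h1 n - h2 n) = NS q h1 - NS q h2.
Proof.
  intros Hq H1 H2. unfold NS. rewrite <- Series_minus by (eapply NS_ex; eauto).
  apply Series_ext; intros; ring.
Qed.

Lemma Series_nonneg a : (forall n, 0 <= a n) -> ex_series a -> 0 <= Series a.
Proof.
  intros H E.
  replace 0 with (Series (fun n => 0 * a n)).
  - apply Series_le; auto. intros n; split; [lra|]. rewrite Rmult_0_l; auto.
  - rewrite Series_scal_l; ring.
Qed.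

Lemma NS_nonneg q h B : 0 < q < 1 -> (forall n, Rabs (h n) <= B) ->
  (forall n, 0 <= h n) -> 0 <= NS q h.
Proof.
  intros Hq Hb H. apply Series_nonneg; [|eapply NS_ex; eauto].
  intros n; apply Rmult_le_pos; auto; apply geom_nonneg; auto.
Qed.

Lemma NS_pos q h B : 0 < q < 1 -> (forall n, Rabs (h n) <= B) ->
  (forall n, 0 <= h n) -> 0 < h 1%nat -> 0 < NS q h.
Proof.
  intros Hq Hb H H1. unfold NS.
  assert (E := NS_ex q h B Hq Hb).
  rewrite Series_incr_1 by auto.
  rewrite Series_incr_1.
  2: { apply (ex_series_incr_1 (fun n => geom q n * h n)); auto. }
  simpl geom at 1 2.
  assert (0 <= Series (fun k => geom q (S (S k)) * h (S (S k)))).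
  { apply Series_nonneg.
    - intros n; apply Rmult_le_pos; auto; apply geom_nonneg; auto.
    - apply (ex_series_incr_n (fun n => geom q n * h n) 2); auto. }
  simpl in *. assert (0 < q * 1 * h 1%nat) by (apply Rmult_lt_0_compat; lra).
  lra.
Qed.

Lemma NS_tail q h B n : 0 < q < 1 -> (forall n, Rabs (h n) <= B) ->
  Rabs (NS q h - sum_f_R0 (fun a => geom q a * h a) n)
    <= B * (1 - sum_f_R0 (geom q) n).
Proof.
  intros Hq Hb. unfold NS.
  assert (E := NS_ex q h B Hq Hb).
  assert (Eabs := NS_exabs q h B Hq Hb).
  rewrite (Series_incr_n _ (S n)) by (auto; lia). simpl Init.Nat.pred.
  rewrite <- (geom_Series q Hq).
  rewrite (Series_incr_n (geom q) (S n)) by (auto using geom_ex; lia). simpl Init.Nat.pred.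
  replace (sum_f_R0 (fun a : nat => geom q a * h a) n +
      Series (fun k : nat => geom q (S n + k)%nat * h (S n + k)%nat) -
      sum_f_R0 (fun a : nat => geom q a * h a) n)
    with (Series (fun k : nat => geom q (S n + k)%nat * h (S n + k)%nat)) by ring.
  replace (sum_f_R0 (geom q) n + Series (fun k : nat => geom q (S n + k)%nat) -
     sum_f_R0 (geom q) n) with (Series (fun k : nat => geom q (S n + k)%nat)) by ring.
  eapply Rle_trans; [apply Series_Rabs|].
  { apply (ex_series_incr_n (fun k => Rabs (geom q k * h k)) (S n)); auto. }
  rewrite <- Series_scal_l.
  apply Series_le.
  - intros k; split; [apply Rabs_pos|].
    rewrite Rabs_mult, (Rabs_pos_eq (geom q _)) by (apply geom_nonneg; auto).
    rewrite Rmult_comm. apply Rmult_le_compat_r; auto. apply geom_nonneg; auto.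
  - apply exs_scal. apply (ex_series_incr_n (geom q) (S n)); apply geom_ex; auto.
Qed.

Lemma psum_bound q (H : nat -> nat -> R) B : (forall a b, Rabs (H a b) <= B) ->
  forall n, exists C, forall b, Rabs (sum_f_R0 (fun a => geom q a * H a b) n) <= C.
Proof.
  intros Hb n; induction n as [|n [C HC]].
  - exists (Rabs (geom q 0) * B). intros b; simpl. rewrite Rabs_mult.
    apply Rmult_le_compat_l; auto. apply Rabs_pos.
  - exists (C + Rabs (geom q (S n)) * B). intros b; simpl.
    eapply Rle_trans; [apply Rabs_triang|]. apply Rplus_le_compat; auto.
    rewrite Rabs_mult. apply Rmult_le_compat_l; auto. apply Rabs_pos.
Qed.

Lemma psum_NS q q' (H : nat -> nat -> R) B : 0 < q' < 1 -> (forall a b, Rabs (H a b) <= B) ->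
  forall n, sum_f_R0 (fun a => geom q a * NS q' (fun b => H a b)) n
          = NS q' (fun b => sum_f_R0 (fun a => geom q a * H a b) n).
Proof.
  intros Hq' Hb n; induction n as [|n IH].
  - simpl. rewrite NS_scal. auto.
  - simpl. rewrite IH. destruct (psum_bound q H B Hb n) as [C HC].
    rewrite (NS_plus q' _ _ C (Rabs (geom q (S n)) * B)); auto.
    + rewrite NS_scal; auto.
    + intros b. rewrite Rabs_mult. apply Rmult_le_compat_l; auto. apply Rabs_pos.
Qed.

Lemma NS_fubini q q' (H : nat -> nat -> R) B : 0 < q < 1 -> 0 < q' < 1 ->
  (forall a b, Rabs (H a b) <= B) ->
  NS q (fun a => NS q' (fun b => H a b)) = NS q' (fun b => NS q (fun a => H a b)).
Proof.
  intros Hq Hq' Hb.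
  assert (HB0 : 0 <= B) by (eapply Rle_trans; [apply Rabs_pos|apply (Hb 0%nat 0%nat)]).
  unfold NS at 1. apply is_series_unique. apply is_series_Reals.
  intros eps Heps.
  assert (G := proj1 (is_series_Reals _ _) (geom_is_series q Hq)).
  destruct (G (eps / (B + 1))) as [N HN].
  { apply Rdiv_lt_0_compat; lra. }
  exists N. intros n Hn. specialize (HN n Hn).
  rewrite (psum_NS q q' H B Hq' Hb n).
  unfold R_dist in *.
  destruct (psum_bound q H B Hb n) as [C HC].
  assert (Hin : forall b, Rabs (NS q (fun a => H a b)) <= B).
  { intros b; apply NS_bound; auto. }
  rewrite <- (NS_minus q' _ _ C B); auto.
  eapply Rle_lt_trans.
  { apply (NS_bound q' _ (B * (1 - sum_f_R0 (geom q) n))); auto.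
    intros b. rewrite Rabs_minus_sym. apply NS_tail; auto. }
  assert (Hx : 1 - sum_f_R0 (geom q) n < eps / (B + 1)).
  { rewrite Rabs_minus_sym in HN. eapply Rle_lt_trans; [apply Rle_abs|exact HN]. }
  assert (B * (1 - sum_f_R0 (geom q) n) <= B * (eps / (B + 1))).
  { apply Rmult_le_compat_l; lra. }
  assert (B * (eps / (B + 1)) < eps).
  { unfold Rdiv. apply (Rmult_lt_reg_r (B + 1)); [lra|].
    rewrite Rmult_assoc, Rmult_assoc, Rinv_l by lra. nra. }
  lra.
Qed.

Lemma ExM_NS pm pb f : ExM pm pb f = NS pm (fun a => NS pm (fun b => NS pb (fun c => f a b c))).
Proof.
  unfold ExM, NS. apply Series_ext; intro a. rewrite <- Series_scal_l.
  apply Series_ext; intro b. rewrite <- Series_scal_l, <- Series_scal_l.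
  apply Series_ext; intro c. ring.
Qed.

Definition bounded3 (g : nat -> nat -> nat -> R) := exists B, forall x y z, Rabs (g x y z) <= B.


Lemma EX_NS (pm pb : R) (tm tb : nat) f : EX pm pb tm tb f =
  NS pm (fun a => NS pm (fun b => NS pb (fun c => f (tm * a)%nat (tm * b)%nat (tb * c)%nat))).
Proof. unfold EX; apply ExM_NS. Qed.

Lemma EX_plus (pm pb : R) (tm tb : nat) (Hpm : 0 < pm < 1) (Hpb : 0 < pb < 1) f g : bounded3 f -> bounded3 g ->
  EX pm pb tm tb (fun x y z => f x y z + g x y z) = EX pm pb tm tb f + EX pm pb tm tb g.
Proof.
  intros [Bf Hf] [Bg Hg]. rewrite !EX_NS.
  rewrite <- (NS_plus _ _ _ Bf Bg); auto.
  2,3: intros; repeat (apply NS_bound; auto; intros).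
  apply NS_ext; intro a.
  rewrite <- (NS_plus _ _ _ Bf Bg); auto.
  2,3: intros; repeat (apply NS_bound; auto; intros).
  apply NS_ext; intro b.
  rewrite <- (NS_plus _ _ _ Bf Bg); auto.
Qed.

Lemma EX_minus (pm pb : R) (tm tb : nat) (Hpm : 0 < pm < 1) (Hpb : 0 < pb < 1) f g : bounded3 f -> bounded3 g ->
  EX pm pb tm tb (fun x y z => f x y z - g x y z) = EX pm pb tm tb f - EX pm pb tm tb g.
Proof.
  intros [Bf Hf] [Bg Hg]. rewrite !EX_NS.
  rewrite <- (NS_minus _ _ _ Bf Bg); auto.
  2,3: intros; repeat (apply NS_bound; auto; intros).
  apply NS_ext; intro a.
  rewrite <- (NS_minus _ _ _ Bf Bg); auto.
  2,3: intros; repeat (apply NS_bound; auto; intros).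
  apply NS_ext; intro b.
  rewrite <- (NS_minus _ _ _ Bf Bg); auto.
Qed.

Lemma EX_scal (pm pb : R) (tm tb : nat) c f : EX pm pb tm tb (fun x y z => c * f x y z) = c * EX pm pb tm tb f.
Proof.
  rewrite !EX_NS. rewrite <- NS_scal. apply NS_ext; intro a.
  rewrite <- NS_scal. apply NS_ext; intro b. apply NS_scal.
Qed.

Lemma EX_ext (pm pb : R) (tm tb : nat) f g : (forall x y z, f x y z = g x y z) -> EX pm pb tm tb f = EX pm pb tm tb g.
Proof.
  intros H. rewrite !EX_NS. apply NS_ext; intro a. apply NS_ext; intro b.
  apply NS_ext; intro c. auto.
Qed.

Lemma EX_swap (pm pb : R) (tm tb : nat) (Hpm : 0 < pm < 1) (Hpb : 0 < pb < 1) f : bounded3 f -> EX pm pb tm tb (fun x y z => f y x z) = EX pm pb tm tb f.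
Proof.
  intros [B HB]. rewrite !EX_NS.
  rewrite (NS_fubini pm pm (fun a b => NS pb (fun c => f (tm * b)%nat (tm * a)%nat (tb * c)%nat)) B);
    auto.
  intros; apply NS_bound; auto.
Qed.


Lemma bnd_plus f g : bounded3 f -> bounded3 g -> bounded3 (fun x y z => f x y z + g x y z).
Proof.
  intros [Bf Hf] [Bg Hg]; exists (Bf + Bg); intros.
  eapply Rle_trans; [apply Rabs_triang|]. apply Rplus_le_compat; auto.
Qed.

Lemma bnd_minus f g : bounded3 f -> bounded3 g -> bounded3 (fun x y z => f x y z - g x y z).
Proof.
  intros [Bf Hf] [Bg Hg]; exists (Bf + Bg); intros.
  eapply Rle_trans; [apply Rabs_triang|]. rewrite Rabs_Ropp. apply Rplus_le_compat; auto.
Qed.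

Lemma bnd_scal c f : bounded3 f -> bounded3 (fun x y z => c * f x y z).
Proof.
  intros [Bf Hf]; exists (Rabs c * Bf); intros. rewrite Rabs_mult.
  apply Rmult_le_compat_l; auto. apply Rabs_pos.
Qed.

Lemma bnd_swap f : bounded3 f -> bounded3 (fun x y z => f y x z).
Proof. intros [B H]; exists B; intros; auto. Qed.

Lemma bnd_ext f g : (forall x y z, f x y z = g x y z) -> bounded3 g -> bounded3 f.
Proof. intros E [B H]; exists B; intros; rewrite E; auto. Qed.

Lemma bnd_expind v (d : nat -> nat -> nat -> R) (b : nat -> nat -> nat -> bool) K :
  (forall x y z, b x y z = true -> Rabs (d x y z) <= K) ->
  bounded3 (fun x y z => exp (- v * d x y z) * indic (b x y z)).
Proof.
  intros H. exists (exp (Rabs v * K)). intros x y z.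
  specialize (H x y z). destruct (b x y z); unfold indic.
  - rewrite Rmult_1_r, Rabs_pos_eq by (apply Rlt_le, exp_pos).
    destruct (Rle_lt_dec (exp (- v * d x y z)) (exp (Rabs v * K))) as [h|h]; auto.
    apply exp_lt_inv in h. exfalso.
    assert (Rabs (- v * d x y z) <= Rabs v * K).
    { rewrite Rabs_mult, Rabs_Ropp. apply Rmult_le_compat_l; auto. apply Rabs_pos. }
    assert (- v * d x y z <= Rabs (- v * d x y z)) by apply Rle_abs. lra.
  - rewrite Rmult_0_r, Rabs_R0. apply Rlt_le, exp_pos.
Qed.


Lemma eA v a b : exp (- v * (a - b)) = exp (v * b) / exp (v * a).
Proof.
  replace (- v * (a - b)) with (v * b + - (v * a)) by ring.
  rewrite exp_plus, exp_Ropp. reflexivity.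
Qed.

Lemma eB v a b c : exp (- v * (2 * c - a - b)) = exp (v * a) * exp (v * b) / (exp (v * c) * exp (v * c)).
Proof.
  replace (- v * (2 * c - a - b)) with (v * a + v * b + - (v * c + v * c)) by ring.
  rewrite !exp_plus, exp_Ropp, exp_plus. reflexivity.
Qed.

Ltac ord_cases x1 x2 xb :=
  destruct (lt_eq_lt_dec x1 x2) as [[?|?]|?];
  destruct (lt_eq_lt_dec x1 xb) as [[?|?]|?];
  destruct (lt_eq_lt_dec x2 xb) as [[?|?]|?]; try (exfalso; lia); subst.

Ltac simpl_mm := repeat (first [rewrite Nat.max_l by lia | rewrite Nat.max_r by lia
                              | rewrite Nat.min_l by lia | rewrite Nat.min_r by lia]).
Ltac simpl_eqb := repeat match goal with
  | |- context [Nat.eqb ?a ?b] => first [rewrite (Nat.eqb_refl a) | rewrite (proj2 (Nat.eqb_neq a b)) by lia]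
  | |- context [Nat.leb ?a ?b] => first [rewrite (proj2 (Nat.leb_le a b)) by lia | rewrite (proj2 (Nat.leb_gt a b)) by lia]
  end.
Ltac destr_ltb := repeat match goal with |- context [Nat.ltb ?a ?b] => destruct (Nat.ltb a b) end.
Ltac exp_field := repeat rewrite eB; repeat rewrite eA; field;
  repeat split; try (apply Rgt_not_eq, exp_pos).

Definition T12 v tcut x1 x2 xb := exp (- v * (INR x1 - INR x2)) * indic (Aij tcut L1 L2 x1 x2 xb).
Definition T1b v tcut x1 x2 xb := exp (- v * (INR x1 - INR xb)) * indic (Aij tcut L1 Lb x1 x2 xb).
Definition T12b v tcut x1 x2 xb := exp (- v * (INR x1 - INR x2))
                 * indic (andb (Aij tcut L1 L2 x1 x2 xb) (Aij tcut L1 Lb x1 x2 xb)).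
Definition Tb v tcut x1 x2 xb := exp (- v * (2 * INR xb - INR x1 - INR x2)) * indic (Ap tcut Lb x1 x2 xb).
Definition T1A2 v tcut x1 x2 xb := exp (- v * (INR x1 - INR xb))
             * indic (andb (Ap tcut L1 x1 x2 xb) (Ap tcut L2 x1 x2 xb)).
Definition T1Ab v tcut x1 x2 xb := exp (- v * (INR x1 - INR x2))
             * indic (andb (Ap tcut L1 x1 x2 xb) (Ap tcut Lb x1 x2 xb)).
Definition Tall tcut x1 x2 xb := indic (andb (andb (Ap tcut L1 x1 x2 xb) (Ap tcut L2 x1 x2 xb)) (Ap tcut Lb x1 x2 xb)).

Lemma pw3 v tcut x1 x2 xb :
  exp (- v * Xdiff tcut x1 x2 xb) * indic (Ysucc tcut x1 x2 xb) =
  T12 v tcut x1 x2 xb + T1b v tcut x1 x2 xb - T12b v tcut x1 x2 xb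
  + T12 v tcut x2 x1 xb + T1b v tcut x2 x1 xb - T12b v tcut x2 x1 xb
  + Tb v tcut x1 x2 xb - T1A2 v tcut x1 x2 xb - T1Ab v tcut x1 x2 xb - T1Ab v tcut x2 x1 xb
  + Tall tcut x1 x2 xb.
Proof.
  unfold T12, T1b, T12b, Tb, T1A2, T1Ab, Tall, Xdiff, Aij, Ap, Ysucc, Xmax, Xmin, Xof.
  ord_cases x1 x2 xb; simpl_mm; simpl_eqb; destr_ltb; cbn [andb orb indic]; exp_field.
Qed.

Lemma store_eq tcoh t w : store tcoh t w = w * exp (- (2 / tcoh) * INR t).
Proof. unfold store. f_equal. f_equal. unfold Rdiv. ring. Qed.

Lemma pw2 wm wb tcoh tmsg tcut x1 x2 xb :
  indic (Ysucc tcut x1 x2 xb) * w_e2e wm wb tcoh tmsg x1 x2 xb =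
  wm ^ 2 * wb * exp (- (2 / tcoh) * INR tmsg) *
   (exp (- (2 / tcoh) * Xdiff tcut x1 x2 xb) * indic (Ysucc tcut x1 x2 xb)).
Proof.
  unfold w_e2e, swapW. cbv zeta. rewrite !store_eq.
  generalize (2 / tcoh) as k; intros k.
  unfold Xdiff, Ap, Ysucc, Xmax, Xmin, Xof.
  ord_cases x1 x2 xb; simpl_mm; simpl_eqb; repeat rewrite minus_INR by lia;
    destr_ltb; cbn [andb orb indic]; exp_field.
Qed.

Lemma Y_R tcut x1 x2 xb : Ysucc tcut x1 x2 xb = true ->
  let T := INR tcut in
  0 <= T /\ INR x1 <= INR x2 + T /\ INR x2 <= INR x1 + T /\ INR x1 <= INR xb + T
  /\ INR xb <= INR x1 + T /\ INR x2 <= INR xb + T /\ INR xb <= INR x2 + T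
  /\ INR (Xmax x1 x2 xb) <= INR (Xmin x1 x2 xb) + T /\ INR (Xmin x1 x2 xb) <= INR (Xmax x1 x2 xb).
Proof.
  unfold Ysucc. intros H%Nat.ltb_lt. cbv zeta.
  unfold Xmax, Xmin in *.
  repeat split; try apply pos_INR; rewrite <- ?plus_INR; apply le_INR; lia.
Qed.

Lemma Y_of_Aij tcut i j x y z : Aij tcut i j x y z = true -> Ysucc tcut x y z = true.
Proof. unfold Aij. destruct (Ysucc tcut x y z); auto. rewrite andb_false_r; auto. Qed.
Lemma Y_of_Ap tcut i x y z : Ap tcut i x y z = true -> Ysucc tcut x y z = true.
Proof. unfold Ap. destruct (Ysucc tcut x y z); auto. rewrite andb_false_r; auto. Qed.

Ltac bnd_tac := intros x y z H; repeat match goal with H : (_ && _)%bool = true |- _ =>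
   apply andb_prop in H; destruct H as [H _] end;
  first [apply Y_of_Aij in H | apply Y_of_Ap in H | idtac];
  destruct (Y_R _ _ _ _ H) as (?&?&?&?&?&?&?&?&?); apply Rabs_le; lra.

Lemma bnd_T12 v tcut : bounded3 (T12 v tcut).
Proof. apply (bnd_expind v (fun x y z => INR x - INR y) _ (2 * INR tcut)); bnd_tac. Qed.
Lemma bnd_T1b v tcut : bounded3 (T1b v tcut).
Proof. apply (bnd_expind v (fun x y z => INR x - INR z) _ (2 * INR tcut)); bnd_tac. Qed.
Lemma bnd_T12b v tcut : bounded3 (T12b v tcut).
Proof. apply (bnd_expind v (fun x y z => INR x - INR y) _ (2 * INR tcut)); bnd_tac. Qed.
Lemma bnd_Tb v tcut : bounded3 (Tb v tcut).
Proof. apply (bnd_expind v (fun x y z => 2 * INR z - INR x - INR y) _ (2 * INR tcut)); bnd_tac. Qed.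
Lemma bnd_T1A2 v tcut : bounded3 (T1A2 v tcut).
Proof. apply (bnd_expind v (fun x y z => INR x - INR z) _ (2 * INR tcut)); bnd_tac. Qed.
Lemma bnd_T1Ab v tcut : bounded3 (T1Ab v tcut).
Proof. apply (bnd_expind v (fun x y z => INR x - INR y) _ (2 * INR tcut)); bnd_tac. Qed.

Lemma indic_bnd b : Rabs (indic b) <= 1.
Proof. destruct b; simpl; rewrite ?Rabs_R1, ?Rabs_R0; lra. Qed.
Lemma indic_nonneg b : 0 <= indic b.
Proof. destruct b; simpl; lra. Qed.

Lemma bnd_Tall tcut : bounded3 (Tall tcut).
Proof. exists 1; intros; apply indic_bnd. Qed.
Lemma bnd_Y tcut : bounded3 (fun x y z => indic (Ysucc tcut x y z)).
Proof. exists 1; intros; apply indic_bnd. Qed.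

Lemma bnd_f v tcut : bounded3 (fun x y z => exp (- v * Xdiff tcut x y z) * indic (Ysucc tcut x y z)).
Proof.
  apply (bnd_expind v (Xdiff tcut) _ (2 * INR tcut)).
  intros x y z H. destruct (Y_R _ _ _ _ H) as (?&?&?&?&?&?&?&?&?).
  unfold Xdiff. destruct (_ || _)%bool; apply Rabs_le; lra.
Qed.

Ltac leaf v tcut := first [apply bnd_T12 | apply bnd_T1b | apply bnd_T12b | apply bnd_Tb
   | apply bnd_T1A2 | apply bnd_T1Ab | apply bnd_Tall
   | apply (bnd_swap (T12 v tcut)), bnd_T12 | apply (bnd_swap (T1b v tcut)), bnd_T1b
   | apply (bnd_swap (T12b v tcut)), bnd_T12b | apply (bnd_swap (T1Ab v tcut)), bnd_T1Ab].
Ltac bt v tcut := repeat (first [apply bnd_minus | apply bnd_plus]); leaf v tcut.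


Theorem mainTheorem2
  (tm tb tmsg tcut : nat) (pm pb wm wb tcoh : R)
  (Htm : (1 <= tm)%nat) (Htb : (1 <= tb)%nat)
  (Hcut : (Nat.max tm (Nat.max tb tmsg) < tcut)%nat)
  (Hpm : 0 < pm < 1) (Hpb : 0 < pb < 1) (Htcoh : 0 < tcoh) :
  let k := 2 / tcoh in
  let p := psucc pm pb tm tb tcut in
  let E := EX pm pb tm tb in
  F_e2e pm pb wm wb tcoh tm tb tmsg tcut
    = (1 + 3 * Ew_e2e pm pb wm wb tcoh tm tb tmsg tcut) / 4
  /\ Ew_e2e pm pb wm wb tcoh tm tb tmsg tcut
    = wm ^ 2 * wb * exp (- k * INR tmsg) / p * U1 pm pb tm tb tcut k
  /\ forall v : R,
    U1 pm pb tm tb tcut v =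
      2 * ( E (fun x1 x2 xb => exp (- v * (INR x1 - INR x2)) * indic (Aij tcut L1 L2 x1 x2 xb))
          + E (fun x1 x2 xb => exp (- v * (INR x1 - INR xb)) * indic (Aij tcut L1 Lb x1 x2 xb))
          - E (fun x1 x2 xb => exp (- v * (INR x1 - INR x2))
                 * indic (andb (Aij tcut L1 L2 x1 x2 xb) (Aij tcut L1 Lb x1 x2 xb))) )
      + E (fun x1 x2 xb => exp (- v * (2 * INR xb - INR x1 - INR x2)) * indic (Ap tcut Lb x1 x2 xb))
      - E (fun x1 x2 xb => exp (- v * (INR x1 - INR xb))
             * indic (andb (Ap tcut L1 x1 x2 xb) (Ap tcut L2 x1 x2 xb)))
      - 2 * E (fun x1 x2 xb => exp (- v * (INR x1 - INR x2))
             * indic (andb (Ap tcut L1 x1 x2 xb) (Ap tcut Lb x1 x2 xb)))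
      + E (fun x1 x2 xb => indic (andb (andb (Ap tcut L1 x1 x2 xb) (Ap tcut L2 x1 x2 xb)) (Ap tcut Lb x1 x2 xb))).
Proof.
  cbv zeta.
  assert (Hw : bounded3 (fun x y z => indic (Ysucc tcut x y z) * w_e2e wm wb tcoh tmsg x y z)).
  { eapply bnd_ext; [intros; apply pw2|]. apply bnd_scal, bnd_f. }
  assert (Hp : 0 < psucc pm pb tm tb tcut).
  { unfold psucc. rewrite EX_NS.
    set (g := fun a b c => indic (Ysucc tcut (tm * a) (tm * b) (tb * c))).
    change (0 < NS pm (fun a => NS pm (fun b => NS pb (fun c => g a b c)))).
    assert (HB : forall a b, Rabs (NS pb (fun c => g a b c)) <= 1).
    { intros; apply NS_bound; auto; intros; apply indic_bnd. }
    assert (HN : forall a b, 0 <= NS pb (fun c => g a b c)).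
    { intros; apply (NS_nonneg _ _ 1); auto; intros; [apply indic_bnd|apply indic_nonneg]. }
    assert (HB2 : forall a, Rabs (NS pm (fun b => NS pb (fun c => g a b c))) <= 1).
    { intros; apply NS_bound; auto. }
    assert (HN2 : forall a, 0 <= NS pm (fun b => NS pb (fun c => g a b c))).
    { intros; apply (NS_nonneg _ _ 1); auto. }
    apply (NS_pos _ _ 1 Hpm HB2 HN2).
    apply (NS_pos _ _ 1 Hpm (HB 1%nat) (HN 1%nat)).
    apply (NS_pos _ _ 1 Hpb); intros; [apply indic_bnd|apply indic_nonneg|].
    unfold g. rewrite !Nat.mul_1_r. unfold Ysucc, Xmax, Xmin.
    replace (Nat.ltb _ tcut) with true; [simpl; lra|].
    symmetry. apply Nat.ltb_lt. lia. }
  split; [|split].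
  - unfold F_e2e, Ew_e2e, CondE.
    rewrite (EX_ext pm pb tm tb _ (fun x y z => / 4 * indic (Ysucc tcut x y z)
        + 3 / 4 * (indic (Ysucc tcut x y z) * w_e2e wm wb tcoh tmsg x y z)))
      by (intros; unfold fidW; field).
    rewrite EX_plus; auto.
    2: apply bnd_scal, bnd_Y.
    2: apply bnd_scal, Hw.
    rewrite !EX_scal.
    change (EX pm pb tm tb (fun x1 x2 xb => indic (Ysucc tcut x1 x2 xb))) with (psucc pm pb tm tb tcut).
    field. lra.
  - unfold Ew_e2e, CondE.
    rewrite (EX_ext pm pb tm tb _ _ (pw2 wm wb tcoh tmsg tcut)).
    rewrite EX_scal. unfold U1. unfold Rdiv. ring.
  - intros v. unfold U1.
    rewrite (EX_ext pm pb tm tb _ _ (pw3 v tcut)).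
    repeat (first [rewrite EX_plus; [|auto|auto|bt v tcut|bt v tcut]
                  | rewrite EX_minus; [|auto|auto|bt v tcut|bt v tcut]]).
    rewrite (EX_swap pm pb tm tb Hpm Hpb (T12 v tcut)) by apply bnd_T12.
    rewrite (EX_swap pm pb tm tb Hpm Hpb (T1b v tcut)) by apply bnd_T1b.
    rewrite (EX_swap pm pb tm tb Hpm Hpb (T12b v tcut)) by apply bnd_T12b.
    rewrite (EX_swap pm pb tm tb Hpm Hpb (T1Ab v tcut)) by apply bnd_T1Ab.
    unfold T12, T1b, T12b, Tb, T1A2, T1Ab, Tall.
    ring.
Qed.
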